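(* Let $\lambda_{\max}>1$ and let $F:[0,\lambda_{\max}]\to\mathbb{R}_+$ be continuously differentiable with $F(0)=0$, such that $F(x)<F^\star$ for all $x\in[0,1)$, $F'(1)>0$, and $F$ is concave-like. Then $F(x)\le F'(1)(x-1)+F(1)$ for all $x\in[0,\lambda_{\max}]$.
   Context: $F^\star=\sup\{\mathbb{E}_\alpha[F(X)]:\alpha$ a probability measure on $[0,\lambda_{\max}]$, $X\sim\alpha$, $\mathbb{E}_\alpha[X]\le1\}$. $F$ is concave-like if for all $x_1,x_2\in[0,\lambda_{\max}]\setminus\{1\}$, $p\in(0,1)$ with $px_1+(1-p)x_2=1$, we have $F(1)>pF(x_1)+(1-p)F(x_2)$. *)

(* Defs.v *)
From HB Require Import structures.
From mathcomp Require Import all_boot all_order all_algebra.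
From mathcomp Require Import all_classical all_reals all_analysis.
Set Implicit Arguments. Unset Strict Implicit. Unset Printing Implicit Defensive.
Import Order.TTheory GRing.Theory Num.Theory.
Import numFieldNormedType.Exports.
Local Open Scope classical_set_scope.
Local Open Scope ring_scope.

Definition admissible (R : realType) (lmax : R) (P : probability R R) : Prop :=
  P [set` `[0%R, lmax]] = 1%E /\ (\int[P]_(x in [set` `[0%R, lmax]]) x%:E <= 1%:E)%E.

Definition Fstar (R : realType) (lmax : R) (F : R -> R) : \bar R :=
  ereal_sup [set (\int[P]_(x in [set` `[0%R, lmax]]) (F x)%:E)%E
            | P in [set P : probability R R | admissible lmax P]].

Definition concave_like (R : realType) (lmax : R) (F : R -> R) : Prop :=
  forall x1 x2 p : R, x1 \in `[0, lmax] -> x2 \in `[0, lmax] ->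
    x1 != 1 -> x2 != 1 -> p \in `]0, 1[ ->
    p * x1 + (1 - p) * x2 = 1 ->
    p * F x1 + (1 - p) * F x2 < F 1.

(* Main.v *)
Require Import Defs.
From HB Require Import structures.
From mathcomp Require Import all_boot all_order all_algebra.
From mathcomp Require Import all_classical all_reals all_analysis.
From mathcomp Require Import ring lra.
Import Order.TTheory GRing.Theory Num.Theory.
Import numFieldNormedType.Exports.
Local Open Scope classical_set_scope.
Local Open Scope ring_scope.
Lemma deriv_pt (R : realType) (F : R -> R) : derivable F 1 1 ->
  forall e a : R, 0 < e -> 0 < a -> exists h, 0 < h < a /\
   `|h^-1 * (F (h + 1) - F 1) - derive1 F 1| < e /\
   `|(- h)^-1 * (F (- h + 1) - F 1) - derive1 F 1| < e.
Proof.
move=> dF e a e0 a0.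
rewrite derive1E.
move: dF => /cvgr_dist_lt /(_ e e0).
move=> /nbhs_ballP [d /= d0 Hd].
set h := Num.min d a / 2.
have hp : 0 < h by rewrite divr_gt0 // lt_min d0 a0.
have hd : h < d by rewrite /h; have := ge_min d d a; rewrite lexx /=; lra.
have ha : h < a by rewrite /h; have := ge_min a d a; rewrite lexx orbT /=; lra.
exists h; split; first by rewrite hp ha.
split.
- have := Hd h.
  rewrite /ball /= sub0r normrN gtr0_norm // => /(_ hd).
  rewrite gt_eqF // => /(_ isT).
  by rewrite distrC /= -[h%:A]/(h * 1) mulr1.
- have := Hd (- h).
  rewrite /ball /= sub0r opprK gtr0_norm // => /(_ hd).
  rewrite oppr_eq0 gt_eqF // => /(_ isT).
  by rewrite distrC /= -[(- h)%:A]/(- h * 1) mulr1.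
Qed.
Lemma cl_ineq (R : realType) (lmax : R) (F : R -> R) :
  concave_like lmax F -> forall x1 x2, 0 <= x1 -> x1 < 1 -> 1 < x2 -> x2 <= lmax ->
  (x2 - 1) * (F x1 - F 1) + (1 - x1) * (F x2 - F 1) < 0.
Proof.
move=> Hcl x1 x2 h1 h2 h3 h4.
have s0 : 0 < x2 - x1 by lra.
set p := (x2 - 1) / (x2 - x1).
have Hp : p * x1 + (1 - p) * x2 = 1.
  rewrite /p; field; lra.
have p0 : 0 < p by rewrite /p divr_gt0 //; lra.
have p1 : p < 1 by rewrite /p ltr_pdivrMr //; lra.
have := Hcl x1 x2 p.
rewrite !in_itv /= p0 p1 (lt_eqF h2) (gt_eqF h3) /=.
have -> : (0 <= x1 <= lmax) by apply/andP; split; lra.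
have -> : (0 <= x2 <= lmax) by apply/andP; split; lra.
move=> /(_ isT isT isT isT isT Hp) H.
have -> : (x2 - 1) * (F x1 - F 1) + (1 - x1) * (F x2 - F 1) =
  (x2 - x1) * (p * F x1 + (1 - p) * F x2 - F 1).
  rewrite /p; field; lra.
by rewrite pmulr_rlt0 //; lra.
Qed.
Theorem lemmaC1 (R : realType) (lmax : R) (F : R -> R)
  (Hlmax : 1 < lmax)
  (HFder : forall x, x \in `[0, lmax] -> derivable F x 1)
  (HFC1 : {within `[0, lmax], continuous (derive1 F)})
  (HFpos : forall x, x \in `[0, lmax] -> 0 <= F x)
  (HF0 : F 0 = 0)
  (HFstar : forall x, x \in `[0, 1[ -> ((F x)%:E < Fstar lmax F)%E)
  (HFd1 : 0 < (derive1 F) 1)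
  (Hcl : concave_like lmax F) :
  forall x, x \in `[0, lmax] -> F x <= (derive1 F) 1 * (x - 1) + F 1.
Proof.
move=> x; rewrite in_itv /= => /andP [x0 xl].
have dF1 : derivable F 1 1.
  by apply: HFder; rewrite in_itv /=; apply/andP; split; lra.
set d := derive1 F 1.
set a := Num.min 1 (lmax - 1).
have a0 : 0 < a by rewrite lt_min ltr01 subr_gt0.
have [a1 a2] : a <= 1 /\ a <= lmax - 1.
  by apply/andP; rewrite -le_min.
case: (ltrgtP x 1) => hx; last by rewrite hx subrr mulr0 add0r.
- rewrite leNgt; apply/negP => H.
  set del := F x - (d * (x - 1) + F 1).
  have del0 : 0 < del by rewrite /del subr_gt0.
  have e0 : 0 < del / (1 - x) by rewrite divr_gt0 //; lra.
  have [h [/andP [h0 ha] [Hq _]]] := @deriv_pt _ F dF1 _ _ e0 a0.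
  set q := h^-1 * (F (h + 1) - F 1) in Hq.
  move: Hq; rewrite -/d ltr_norml => /andP [Hq1 _].
  have hh1 : 1 < 1 + h by lra.
  have hh2 : 1 + h <= lmax by lra.
  have := @cl_ineq _ lmax F Hcl _ _ x0 hx hh1 hh2.
  have -> : F (1 + h) - F 1 = h * q by rewrite /q (addrC h 1) mulrA mulfV ?mul1r // gt_eqF.
  have -> : (1 + h - 1) * (F x - F 1) + (1 - x) * (h * q) =
    h * (F x - F 1 + (1 - x) * q) by ring.
  rewrite pmulr_rlt0 // => H2.
  have H3 : (1 - x) * (d - del / (1 - x)) < (1 - x) * q.
    by rewrite ltr_pM2l ?subr_gt0 //; lra.
  have H4 : (1 - x) * (d - del / (1 - x)) = (1 - x) * d - del.
    by field; lra.
  rewrite H4 in H3.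
  have H5 : d * (x - 1) = - ((1 - x) * d) by ring.
  rewrite /del H5 in H3; lra.
- rewrite leNgt; apply/negP => H.
  set del := F x - (d * (x - 1) + F 1).
  have del0 : 0 < del by rewrite /del subr_gt0.
  have e0 : 0 < del / (x - 1) by rewrite divr_gt0 //; lra.
  have [h [/andP [h0 ha] [_ Hq]]] := @deriv_pt _ F dF1 _ _ e0 a0.
  set q := (- h)^-1 * (F (- h + 1) - F 1) in Hq.
  move: Hq; rewrite -/d ltr_norml => /andP [_ Hq1].
  have hh1 : 0 <= 1 - h by lra.
  have hh2 : 1 - h < 1 by lra.
  have := @cl_ineq _ lmax F Hcl _ _ hh1 hh2 hx xl.
  have -> : F (1 - h) - F 1 = - h * q by rewrite /q (addrC (- h) 1) mulrA mulfV ?mul1r // oppr_eq0 gt_eqF.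
  have -> : (x - 1) * (- h * q) + (1 - (1 - h)) * (F x - F 1) =
    h * (F x - F 1 - (x - 1) * q) by ring.
  rewrite pmulr_rlt0 // => H2.
  have H3 : (x - 1) * q < (x - 1) * (d + del / (x - 1)).
    by rewrite ltr_pM2l ?subr_gt0 //; lra.
  have H4 : (x - 1) * (d + del / (x - 1)) = (x - 1) * d + del.
    by field; lra.
  rewrite H4 in H3.
  have H5 : d * (x - 1) = (x - 1) * d by ring.
  rewrite /del H5 in H3; lra.
Qed.
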